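(* Let $A$ and $G$ be $3$-connected cubic graphs. Then every graph $G\circ A^-$ is $3$-connected.
   Context: Let $G$ and $A$ be $3$-regular graphs, let $a$ be a vertex of $A$ and $A^-=A-a$. A graph $G\circ A^-$ is any graph obtained by replacing each vertex $v$ of $G$ by a copy $A^-_v$ of $A^-$ and, for each edge $uv$ of $G$, adding an edge joining a vertex of degree $2$ of $A^-_u$ to a vertex of degree $2$ of $A^-_v$, so that each degree-$2$ vertex of each copy is incident with exactly one added edge (the choices of $a$ and of these edges are arbitrary). *)

(* Defs.v *)
From mathcomp Require Import all_boot.
Set Implicit Arguments. Unset Strict Implicit. Unset Printing Implicit Defensive.

Definition simple_graph (T : finType) (e : rel T) : Prop :=
  symmetric e /\ irreflexive e.

Definition cubic (T : finType) (e : rel T) : Prop :=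
  forall x : T, #|[set y | e x y]| = 3.

Definition del_rel (T : finType) (e : rel T) (X : {set T}) : rel T :=
  [rel u v | [&& e u v, u \notin X & v \notin X]].

Definition k_connected (k : nat) (T : finType) (e : rel T) : Prop :=
  k < #|T| /\
  forall X : {set T}, #|X| < k ->
    forall x y : T, x \notin X -> y \notin X -> connect (del_rel e X) x y.

Section Composition.
Variables (TG TA : finType) (eG : rel TG) (eA : rel TA) (a : TA).

(* vertex set of G o A^- : pairs (v, x) with x a vertex of A^- = A - a,
   i.e. (v, x) is the copy of x in A^-_v. *)
Definition comp_vert : finType := {p : TG * TA | p.2 != a}.

(* port u v = the vertex of A^-_u that is the endpoint of the added edge
   corresponding to the edge uv of G. *)
Definition valid_ports (port : TG -> TG -> TA) : Prop :=
  (* the endpoint in A^-_u is a degree-2 vertex of A^-, i.e. a neighbour of a *)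
  (forall u v, eG u v -> eA a (port u v)) /\
  (* each degree-2 vertex of each copy is incident with exactly one added edge *)
  (forall u x, eA a x -> #|[set v | eG u v & port u v == x]| = 1).

Definition comp_rel (port : TG -> TG -> TA) : rel comp_vert :=
  fun p q =>
    let: (u, x) := val p in
    let: (v, y) := val q in
    ((u == v) && eA x y) || [&& eG u v, port u v == x & port v u == y].

End Composition.

Arguments comp_vert : clear implicits.
Arguments comp_rel [TG TA] eG eA a port _ _.

(* Main.v *)
Require Import Defs.
From mathcomp Require Import all_boot.

Lemma connect_map (T T' : finType) (r : rel T) (r' : rel T') (h : T -> T') :
  (forall x y, r x y -> r' (h x) (h y)) ->
  forall x y, connect r x y -> connect r' (h x) (h y).
Proof.
move=> Hh x y /connectP [p pth ->].
elim: p x pth => [|z p IH] x /=; first by rewrite connect0.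
case/andP => rxz pz.
exact: connect_trans (connect1 (Hh _ _ rxz)) (IH _ pz).
Qed.

Lemma first_hit (T : finType) (r : rel T) (a z : T) : z != a -> connect r z a ->
  exists2 n, connect [rel x y | [&& r x y, x != a & y != a]] z n & r n a.
Proof.
move=> za /connectP [p].
elim: p z za => [|y p IH] z za /=.
- by move=> _ E; rewrite E eqxx in za.
- case/andP=> rzy py E.
  case: (eqVneq y a) => [ya|ya].
  + by exists z => //; rewrite -ya.
  + have [n c rn] := IH y ya py E.
    exists n => //.
    apply: connect_trans c.
    apply: connect1. by rewrite /= rzy za ya.
Qed.

Lemma del_sym (T : finType) (e : rel T) (X : {set T}) :
  symmetric e -> symmetric (del_rel e X).
Proof. by move=> s x y; rewrite /del_rel /= s; congr (_ && _); apply: andbC. Qed.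

Lemma comp_rel_sym (TG TA : finType) (eG : rel TG) (eA : rel TA) a port :
  symmetric eG -> symmetric eA -> symmetric (comp_rel eG eA a port).
Proof.
move=> sG sA p q; rewrite /comp_rel.
case: (val p) => u x; case: (val q) => v y.
rewrite (eq_sym v u) (sA y x) (sG v u).
by congr (_ || (_ && _)); apply: andbC.
Qed.

Theorem proposition5p18 (TG TA : finType) (eG : rel TG) (eA : rel TA) :
  simple_graph eG -> cubic eG -> k_connected 3 eG ->
  simple_graph eA -> cubic eA -> k_connected 3 eA ->
  forall (a : TA) (port : TG -> TG -> TA),
    valid_ports eG eA a port ->
    k_connected 3 (comp_rel eG eA a port).
Proof.
move=> [sG iG] cG [kG1 kG] [sA iA] cA [kA1 kA] a port [vp1 vp2].
set H := comp_rel eG eA a port.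
have Hsym : symmetric H by apply: comp_rel_sym.
have [b ab] : exists b, eA a b.
  have : 0 < #|[set y | eA a y]| by rewrite cA.
  by case/card_gt0P => y; rewrite inE; exists y.
have ba : b != a by apply/eqP => E; rewrite E iA in ab.
split.
  apply: leq_trans kG1 _.
  apply: (@leq_card _ _ (fun v => (Sub (v, b) ba : comp_vert TG TA a))).
  by move=> v w /(congr1 val); rewrite !SubK => -[].
move=> X cX p q pX qX.
pose lift := fun v y => insubd p (v, y) : comp_vert TG TA a.
have liftK : forall v y, y != a -> val (lift v y) = (v, y).
  by move=> v y ya; rewrite /lift insubdK.
set Bad := [set (val r).1 | r in X].
have cBad : #|Bad| < 3 := leq_ltn_trans (leq_imset_card _ _) cX.
have inBad : forall v y, y != a -> lift v y \in X -> v \in Bad.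
  by move=> v y ya lX; apply/imsetP; exists (lift v y) => //; rewrite liftK.
have copy : forall v x y, v \notin Bad -> x != a -> y != a ->
    connect (del_rel H X) (lift v x) (lift v y).
  move=> v x y vB xa ya.
  have c1 : #|[set a]| < 3 by rewrite cards1.
  have xa' : x \notin [set a] by rewrite inE.
  have ya' : y \notin [set a] by rewrite inE.
  have := kA [set a] c1 x y xa' ya'.
  apply: (@connect_map _ _ _ _ (lift v)) => x' y'; rewrite /del_rel /= !inE => /and3P [e x'a y'a].
  apply/and3P; split.
  - by rewrite /H /comp_rel !liftK // eqxx e.
  - by apply: contra vB; exact: inBad.
  - by apply: contra vB; exact: inBad.
have good : forall v w x y, v \notin Bad -> w \notin Bad -> x != a -> y != a ->
    connect (del_rel H X) (lift v x) (lift w y).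
  move=> v w x y vB wB xa ya.
  have /connectP [s pth E] := kG Bad cBad v w vB wB.
  elim: s v x vB xa pth E => [|v1 s IH] v x vB xa /=.
    by move=> _ ->; apply: copy.
  case/andP => /and3P [e _ v1B] pth E.
  have pa : port v v1 != a.
    by apply/eqP=> E'; have := vp1 _ _ e; rewrite E' iA.
  have e' : eG v1 v by rewrite sG.
  have pa' : port v1 v != a.
    by apply/eqP=> E'; have := vp1 _ _ e'; rewrite E' iA.
  apply: connect_trans (copy v x (port v v1) vB xa pa) _.
  apply: connect_trans (IH v1 (port v1 v) v1B pa' pth E).
  apply: connect1; apply/and3P; split.
  - by rewrite /H /comp_rel !liftK // e !eqxx /= ?orbT.
  - by apply: contra vB; exact: inBad.
  - by apply: contra v1B; exact: inBad.
have escape : forall r, r \notin X -> exists v, exists y,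
    [/\ v \notin Bad, y != a & connect (del_rel H X) r (lift v y)].
  move=> r rX.
  case E: (val r) => [u x].
  have xa : x != a by have := valP r; rewrite E.
  have rE : r = lift u x by apply: val_inj; rewrite liftK.
  rewrite rE in rX *.
  pose f := fun r : comp_vert TG TA a =>
    let: (w, y) := val r in if w == u then y else if eG u w then port u w else y.
  set S := [set f r | r in X].
  have fa : forall r, f r != a.
    move=> r'; rewrite /f; case E': (val r') => [w y].
    have ya : y != a by have := valP r'; rewrite E'.
    case: ifP => // _; case: ifP => // e.
    by apply/eqP=> E2; have := vp1 _ _ e; rewrite E2 iA.
  have aS : a \notin S.
    by apply/imsetP => -[r' _ E']; move: (fa r'); rewrite -E' eqxx.
  have PS1 : forall y, y != a -> lift u y \in X -> y \in S.
    by move=> y ya yX; apply/imsetP; exists (lift u y) => //; rewrite /f liftK // eqxx.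
  have PS2 : forall v, eG u v -> v \in Bad -> port u v \in S.
    move=> v e /imsetP [r' r'X Ev]; apply/imsetP; exists r' => //.
    rewrite /f; case E': (val r') Ev => [w y] /= Ev; rewrite Ev in e.
    have wu : (w == u) = false by apply/eqP => wu; rewrite wu iG in e.
    by rewrite wu e Ev.
  have cS : #|S| < 3 := leq_ltn_trans (leq_imset_card _ _) cX.
  have [z [za zS cz]] : exists z, [/\ z != a, z \notin S &
        connect (del_rel H X) (lift u x) (lift u z)].
    case xS: (x \in S); last by exists x; rewrite xa xS connect0.
    have : ~~ ([set y | eA x y] \subset a |: (S :\ x)).
      apply/negP => /subset_leq_card; rewrite cA cardsU1.
      move: cS; rewrite (cardsD1 x S) xS.
      by case: (a \notin S :\ x); case: #|S :\ x| => [|[|[|k]]].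
    case/subsetPn => y; rewrite inE => xy; rewrite !inE negb_or => /andP [ya].
    rewrite negb_and negbK => yS.
    have yx : (y == x) = false by apply/eqP => yx; rewrite yx iA in xy.
    rewrite yx /= in yS.
    exists y; split => //.
    apply: connect1; apply/and3P; split => //.
    - by rewrite /H /comp_rel !liftK // eqxx xy.
    - by apply: contra yS; exact: PS1.
  have cA' := kA S cS z a zS aS.
  have [n cn nA] := @first_hit _ _ _ _ za cA'.
  move: nA; rewrite /del_rel /= => /and3P [na nS _].
  have nna : n != a by apply/eqP => E'; rewrite E' iA in na.
  have cun : connect (del_rel H X) (lift u z) (lift u n).
    move: cn; apply: (@connect_map _ _ _ _ (lift u)) => x0 y0; rewrite /del_rel /=.
    case/and3P => /and3P [e x0S y0S] x0a y0a.
    apply/and3P; split.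
    - by rewrite /H /comp_rel !liftK // eqxx e.
    - by apply: contra x0S; exact: PS1.
    - by apply: contra y0S; exact: PS1.
  have an : eA a n by rewrite sA.
  have /card_gt0P [v] : 0 < #|[set v | eG u v & port u v == n]| by rewrite (vp2 _ _ an).
  rewrite inE => /andP [e /eqP pn].
  have vB : v \notin Bad by apply: contra nS => vB; rewrite -pn; exact: PS2.
  have e' : eG v u by rewrite sG.
  have pa' : port v u != a.
    by apply/eqP=> E'; have := vp1 _ _ e'; rewrite E' iA.
  exists v, (port v u); split => //.
  apply: connect_trans cz _; apply: connect_trans cun _.
  apply: connect1; apply/and3P; split.
  - by rewrite /H /comp_rel !liftK // e pn !eqxx /= ?orbT.
  - by apply: contra nS; exact: PS1.
  - by apply: contra vB; exact: inBad.
have [v [y [vB ya cp]]] := escape p pX.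
have [w [y' [wB ya' cq]]] := escape q qX.
apply: connect_trans cp _.
apply: connect_trans (good v w y y' vB wB ya ya') _.
by rewrite sym_connect_sym //; apply: del_sym.
Qed.
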